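(* Consider a nonrelativistic quantum system with one degree of freedom and Hamiltonian $$H(\hat q,\hat p)=\frac{\hat p^2}{2m}+\tfrac12 c(\hat q\hat p+\hat p\hat q)+\xi_p\hat p+U(\hat q),$$ with $m>0$, $c,\xi_p\in\mathbb R$ and $U$ a real function. Suppose the system is in a pure state with wave function $\psi(q,t)=\Omega(q,t)e^{iS(q,t)/\hbar}$, $\Omega=|\psi|$. Let $\Delta q^2$ and $\Delta p^2$ be the variances of position and momentum in this state, and let $\mathrm{Cov}(\partial_qS,\partial_qS)=\langle(\partial_qS)^2\rangle-\langle\partial_qS\rangle^2$ with means taken with respect to $\Omega^2dq$. Then $$\Delta p^2\Delta q^2-\mathrm{Cov}(\partial_qS,\partial_qS)\,\Delta q^2-\frac{\hbar^2}{4}\ \ge\ 0 .$$ Moreover, this inequality is stronger than the Robertson–Schrödinger uncertainty relation $$\Delta q^2\Delta p^2-[\mathrm{Cov}(q,p)]^2-\frac{\hbar^2}{4}\ge 0,$$ in the sense that it is a sufficient but not necessary condition for it.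
   Context: The amplitude $\Omega$ is assumed continuous and twice continuously differentiable, with $\int_{\mathbb R}\Omega^2dq=1$ and $\Omega\to0$ as $|q|\to\infty$. Variances are $\Delta q^2=\langle\psi|\hat q^2|\psi\rangle-\langle\psi|\hat q|\psi\rangle^2$, $\Delta p^2=\langle\psi|\hat p^2|\psi\rangle-\langle\psi|\hat p|\psi\rangle^2$, and the symmetrized position–momentum covariance is $\mathrm{Cov}(q,p)=\tfrac12\langle\psi|\hat q\hat p+\hat p\hat q|\psi\rangle-\langle\psi|\hat q|\psi\rangle\langle\psi|\hat p|\psi\rangle$. *)

(* Defs.v *)
From Stdlib Require Import Reals.
From Coquelicot Require Import Coquelicot.
Open Scope R_scope.

Definition Iall (f : R -> R) : R :=
  RInt_gen f (Rbar_locally m_infty) (Rbar_locally p_infty).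
Definition ex_Iall (f : R -> R) : Prop :=
  ex_RInt_gen f (Rbar_locally m_infty) (Rbar_locally p_infty).

(* The state psi(q) = Om(q) * exp(i S(q) / hbar), Om = |psi| (fixed time).
   All expectation values below are the (real) values of <psi| A |psi>,
   written out in terms of Om and S. *)

Definition mean_q (Om : R -> R) : R := Iall (fun q => q * Om q ^ 2).
Definition mean_q2 (Om : R -> R) : R := Iall (fun q => q ^ 2 * Om q ^ 2).
Definition var_q (Om : R -> R) : R := mean_q2 Om - mean_q Om ^ 2.

(* <psi| p |psi> = Re \int conj(psi) (-i hbar psi') dq = \int Om^2 S' dq *)
Definition mean_p (Om S : R -> R) : R := Iall (fun q => Om q ^ 2 * Derive S q).
(* <psi| p^2 |psi> = Re \int conj(psi) (-hbar^2 psi'') dq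
                   = \int ( -hbar^2 Om Om'' + Om^2 S'^2 ) dq *)
Definition mean_p2 (hbar : R) (Om S : R -> R) : R :=
  Iall (fun q => - hbar ^ 2 * Om q * Derive_n Om 2 q + Om q ^ 2 * Derive S q ^ 2).
Definition var_p (hbar : R) (Om S : R -> R) : R :=
  mean_p2 hbar Om S - mean_p Om S ^ 2.

(* 1/2 <psi| q p + p q |psi> = Re of the same = \int q Om^2 S' dq *)
Definition mean_qp_sym (Om S : R -> R) : R :=
  Iall (fun q => q * Om q ^ 2 * Derive S q).
Definition cov_qp (Om S : R -> R) : R :=
  mean_qp_sym Om S - mean_q Om * mean_p Om S.

Definition cov_SS (Om S : R -> R) : R :=
  Iall (fun q => Om q ^ 2 * Derive S q ^ 2)
  - Iall (fun q => Om q ^ 2 * Derive S q) ^ 2.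

Definition admissible (Om S : R -> R) : Prop :=
  (forall q, 0 <= Om q) /\
  (forall q, ex_derive Om q) /\
  (forall q, ex_derive (Derive Om) q) /\
  (forall q, continuous (Derive_n Om 2) q) /\
  (forall q, ex_derive S q) /\
  is_RInt_gen (fun q => Om q ^ 2) (Rbar_locally m_infty) (Rbar_locally p_infty) 1 /\
  filterlim Om (Rbar_locally m_infty) (locally 0) /\
  filterlim Om (Rbar_locally p_infty) (locally 0) /\
  ex_Iall (fun q => q * Om q ^ 2) /\
  ex_Iall (fun q => q ^ 2 * Om q ^ 2) /\
  ex_Iall (fun q => Om q * Derive_n Om 2 q) /\
  ex_Iall (fun q => Om q ^ 2 * Derive S q) /\
  ex_Iall (fun q => Om q ^ 2 * Derive S q ^ 2) /\
  ex_Iall (fun q => q * Om q ^ 2 * Derive S q).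

Definition new_lhs (hbar : R) (Om S : R -> R) : R :=
  var_p hbar Om S * var_q Om - cov_SS Om S * var_q Om - hbar ^ 2 / 4.
Definition rs_lhs (hbar : R) (Om S : R -> R) : R :=
  var_q Om * var_p hbar Om S - cov_qp Om S ^ 2 - hbar ^ 2 / 4.

(* Main.v *)
Require Import Defs.
From Coquelicot Require Import Coquelicot.
From Stdlib Require Import Reals Lra Classical.
Open Scope R_scope.

Notation Fm := (Rbar_locally m_infty).
Notation Fp := (Rbar_locally p_infty).

Lemma gen_lim (f : R -> R) l : is_RInt_gen f Fm Fp l ->
  forall eps, 0 < eps -> exists M, 0 < M /\ forall a b, a < -M -> M < b ->
   exists y, is_RInt f a b y /\ Rabs (y - l) < eps.
Proof.
  intros H eps He.
  assert (Hl : locally l (ball l eps)).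
  { exists (mkposreal eps He). intros y Hy. exact Hy. }
  specialize (H _ Hl). destruct H as [Q R' [M1 HQ] [M2 HR] HP].
  exists (Rmax 1 (Rmax (Rabs M1) (Rabs M2))). split.
  { apply Rlt_le_trans with 1; [lra| apply Rmax_l]. }
  intros a b Ha Hb.
  assert (HQa : Q a).
  { apply HQ. pose proof (Rmax_r 1 (Rmax (Rabs M1) (Rabs M2))).
    pose proof (Rmax_l (Rabs M1) (Rabs M2)). pose proof (Rle_abs (-M1)).
    rewrite Rabs_Ropp in H1. lra. }
  assert (HRb : R' b).
  { apply HR. pose proof (Rmax_r 1 (Rmax (Rabs M1) (Rabs M2))).
    pose proof (Rmax_r (Rabs M1) (Rabs M2)). pose proof (Rle_abs M2). lra. }
  destruct (HP a b HQa HRb) as [y [Hy1 Hy2]].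
  exists y. split; [exact Hy1|]. exact Hy2.
Qed.

Lemma gen_nonneg (f : R -> R) l : is_RInt_gen f Fm Fp l ->
  (forall x, 0 <= f x) -> 0 <= l.
Proof.
  intros H Hf. apply Rnot_lt_le. intro Hlt.
  destruct (gen_lim f l H (-l) ltac:(lra)) as [M [HM HP]].
  destruct (HP (-M-1) (M+1) ltac:(lra) ltac:(lra)) as [y [Hy1 Hy2]].
  assert (0 <= y).
  { rewrite <- (is_RInt_unique _ _ _ _ Hy1). apply RInt_ge_0. lra.
    eexists; eauto. intros; apply Hf. }
  apply Rabs_def2 in Hy2. lra.
Qed.

Lemma gen_sub (f : R -> R) l : is_RInt_gen f Fm Fp l ->
  (forall x, 0 <= f x) -> (forall x, continuous f x) ->
  forall a b, a <= b -> RInt f a b <= l.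
Proof.
  intros H Hf Hc a b Hab. apply Rnot_lt_le. intro Hlt.
  set (e := (RInt f a b - l)/2).
  destruct (gen_lim f l H e ltac:(unfold e; lra)) as [M [HM HP]].
  set (a' := Rmin a (-M) - 1). set (b' := Rmax b M + 1).
  assert (Ha' : a' < -M). { unfold a'. pose proof (Rmin_r a (-M)). lra. }
  assert (Hb' : M < b'). { unfold b'. pose proof (Rmax_r b M). lra. }
  assert (Ha'' : a' <= a). { unfold a'. pose proof (Rmin_l a (-M)). lra. }
  assert (Hb'' : b <= b'). { unfold b'. pose proof (Rmax_l b M). lra. }
  destruct (HP a' b' Ha' Hb') as [y [Hy1 Hy2]].
  assert (Hex : forall u v, ex_RInt f u v).
  { intros. apply (ex_RInt_continuous (V:=R_CompleteNormedModule)). intros; apply Hc. }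
  assert (RInt f a b <= y).
  { rewrite <- (is_RInt_unique _ _ _ _ Hy1).
    rewrite <- (RInt_Chasles f a' a b') by auto.
    rewrite <- (RInt_Chasles f a b b') by auto.
    assert (0 <= RInt f a' a) by (apply RInt_ge_0; auto).
    assert (0 <= RInt f b b') by (apply RInt_ge_0; auto).
    simpl. unfold plus; simpl. lra. }
  apply Rabs_def2 in Hy2. unfold e in *. lra.
Qed.

Lemma gen_ext (f g : R -> R) l : (forall x, f x = g x) ->
  is_RInt_gen f Fm Fp l -> is_RInt_gen g Fm Fp l.
Proof.
  intros Hfg H. apply (is_RInt_gen_ext f); try exact H.
  apply filter_forall. intros; auto.
Qed.

Lemma gen_lin (f g : R -> R) c lf lg :
  is_RInt_gen f Fm Fp lf -> is_RInt_gen g Fm Fp lg ->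
  is_RInt_gen (fun x => c * f x + g x) Fm Fp (c * lf + lg).
Proof.
  intros Hf Hg.
  exact (is_RInt_gen_plus _ _ _ _ (is_RInt_gen_scal _ c _ Hf) Hg).
Qed.

Lemma gen_scal (f : R -> R) c lf :
  is_RInt_gen f Fm Fp lf ->
  is_RInt_gen (fun x => c * f x) Fm Fp (c * lf).
Proof.
  intros Hf. exact (is_RInt_gen_scal _ c _ Hf).
Qed.
Lemma cR_plus (f g : R -> R) x : continuous f x -> continuous g x -> continuous (fun y => f y + g y) x.
Proof. intros; apply (continuous_plus f g); auto. Qed.
Lemma cR_mult (f g : R -> R) x : continuous f x -> continuous g x -> continuous (fun y => f y * g y) x.
Proof. intros; apply (continuous_mult f g); auto. Qed.
Lemma cR_minus (f g : R -> R) x : continuous f x -> continuous g x -> continuous (fun y => f y - g y) x.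
Proof. intros; apply (continuous_minus f g); auto. Qed.
Lemma cR_opp (f : R -> R) x : continuous f x -> continuous (fun y => - f y) x.
Proof. intros; apply (continuous_opp f); auto. Qed.
Lemma cR_pow (f : R -> R) n x : continuous f x -> continuous (fun y => f y ^ n) x.
Proof. intros H; induction n; simpl. apply continuous_const. apply cR_mult; auto. Qed.
Ltac cont := repeat first [ match goal with H : forall x, continuous ?f x |- continuous ?f _ => apply H end | match goal with |- continuous (fun y => _ + _) _ => apply cR_plus end | match goal with |- continuous (fun y => _ - _) _ => apply cR_minus end | match goal with |- continuous (fun y => _ * _) _ => apply cR_mult end | match goal with |- continuous (fun y => - _) _ => apply cR_opp end | match goal with |- continuous (fun y => _ ^ _) _ => apply cR_pow end | apply continuous_id | apply continuous_const].

Lemma integ_step (G G' f : R -> R) s t eps u v :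
  u <= v ->
  (forall x, is_derive G x (G' x)) -> (forall x, continuous G' x) ->
  (forall x, continuous f x) ->
  (forall x, u < x < v -> eps <= s * G' x + 2 * t * f x) ->
  eps * (v - u) <= s * (G v - G u) + 2 * t * RInt f u v.
Proof.
  intros Huv HG HG' Hf Hp.
  assert (Hex : ex_RInt f u v).
  { apply (ex_RInt_continuous (V:=R_CompleteNormedModule)). intros; apply Hf. }
  assert (H1 : is_RInt (fun x => s * G' x + 2 * t * f x) u v (s * (G v - G u) + 2 * t * RInt f u v)).
  { apply (is_RInt_plus (V:=R_NormedModule) (fun x => s * G' x) (fun x => 2 * t * f x)).
    apply (is_RInt_scal (V:=R_NormedModule) G').
    apply (is_RInt_derive (V:=R_CompleteNormedModule) G G'); intros; auto.
    apply (is_RInt_scal (V:=R_NormedModule) f).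
    apply (RInt_correct (V:=R_CompleteNormedModule)); auto. }
  assert (H2 : is_RInt (fun _ => eps) u v ((v - u) * eps)).
  { apply (is_RInt_const (V:=R_NormedModule)). }
  rewrite <- (is_RInt_unique _ _ _ _ H1).
  replace (eps * (v - u)) with ((v - u) * eps) by ring.
  rewrite <- (is_RInt_unique _ _ _ _ H2).
  apply RInt_le; auto; eexists; eauto.
Qed.

Lemma ball_ev (Om : R -> R) (F : (R -> Prop) -> Prop) :
  filterlim Om F (locally 0) -> F (fun x => Rabs (Om x) < 1).
Proof.
  intros H.
  assert (Hl : locally 0 (fun y => Rabs y < 1)).
  { exists (mkposreal 1 Rlt_0_1). intros y Hy. simpl in Hy.
    unfold ball in Hy; simpl in Hy; unfold AbsRing_ball, minus, plus, opp, abs in Hy; simpl in Hy.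
    rewrite Ropp_0, Rplus_0_r in Hy. exact Hy. }
  exact (H _ Hl).
Qed.

Lemma key (Om : R -> R) mu m2 K
  (HdO : forall q, ex_derive Om q) (HddO : forall q, ex_derive (Derive Om) q)
  (Hc2 : forall q, continuous (Derive (Derive Om)) q)
  (Hlm : filterlim Om Fm (locally 0)) (Hlp : filterlim Om Fp (locally 0))
  (HG : is_RInt_gen (fun q => Om q ^ 2) Fm Fp 1)
  (Hq : is_RInt_gen (fun q => q * Om q ^ 2) Fm Fp mu)
  (Hq2 : is_RInt_gen (fun q => q ^ 2 * Om q ^ 2) Fm Fp m2)
  (HK : is_RInt_gen (fun q => Om q * Derive (Derive Om) q) Fm Fp K) :
  forall t, 0 < t -> 0 <= t ^ 2 * (m2 - mu ^ 2) - t - K.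
Proof.
  intros t Ht.
  assert (HcO : forall x, continuous Om x) by (intros; apply (ex_derive_continuous (K:=R_AbsRing) (V:=R_NormedModule)); auto).
  assert (HcO' : forall x, continuous (Derive Om) x) by (intros; apply (ex_derive_continuous (K:=R_AbsRing) (V:=R_NormedModule)); auto).
  set (L := t ^ 2 * (m2 - mu ^ 2) - t - K).
  apply Rnot_lt_le; intro HL.
  set (k := fun x => t^2*(x-mu)^2*Om x^2 - t*Om x^2 - Om x * Derive (Derive Om) x).
  assert (Hk : is_RInt_gen k Fm Fp L).
  { pose proof (gen_scal _ (-1) _ HK) as H1.
    pose proof (gen_lin _ _ (t^2*mu^2 - t) _ _ HG H1) as H2.
    pose proof (gen_lin _ _ (-2*t^2*mu) _ _ Hq H2) as H3.
    pose proof (gen_lin _ _ (t^2) _ _ Hq2 H3) as H4.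
    replace L with (t ^ 2 * m2 + (-2*t^2*mu * mu + ((t^2*mu^2 - t) * 1 + -1 * K))) by (unfold L; ring).
    refine (gen_ext _ _ _ _ H4). intros x. unfold k. ring. }
  set (f := fun x => ((x-mu)^2 + 1) * Om x ^ 2).
  set (Lf := m2 - 2*mu*mu + (mu^2+1)*1).
  assert (Hf : is_RInt_gen f Fm Fp Lf).
  { pose proof (gen_lin _ _ (mu^2+1) _ _ HG (gen_scal _ 0 _ HG)) as H2.
    pose proof (gen_lin _ _ (-2*mu) _ _ Hq H2) as H3.
    pose proof (gen_lin _ _ 1 _ _ Hq2 H3) as H4.
    replace Lf with (1 * m2 + (-2*mu * mu + ((mu^2+1) * 1 + 0 * 1))) by (unfold Lf; ring).
    refine (gen_ext _ _ _ _ H4). intros x. unfold f. ring. }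
  assert (Hfpos : forall x, 0 <= f x).
  { intros x; unfold f. apply Rmult_le_pos. pose proof (pow2_ge_0 (x-mu)); lra. apply pow2_ge_0. }
  assert (Hfc : forall x, continuous f x).
  { intros x; unfold f; cont; auto. }
  assert (HLf : 0 <= Lf) by (apply (gen_nonneg f); auto).
  set (eps := - L / 2).
  assert (Heps : 0 < eps) by (unfold eps; lra).
  destruct (gen_lim k L Hk eps Heps) as [M [HM HP]].
  set (h := fun x => t*(x-mu)*Om x^2 + Om x * Derive Om x).
  set (h' := fun x => t*Om x^2 + t*(x-mu)*(2*Om x*Derive Om x) + Derive Om x * Derive Om x + Om x * Derive (Derive Om) x).
  assert (Hh' : forall x, is_derive h x (h' x)).
  { intros x; unfold h, h'. auto_derive. auto. change (fun x0 : R => Om x0) with Om.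
    change (fun x0 : R => Derive Om x0) with (Derive Om). ring. }
  assert (Hh'c : forall x, continuous h' x).
  { intros x; unfold h'; cont; auto. }
  assert (Hkc : forall x, continuous k x).
  { intros x; unfold k; cont; auto. }
  assert (Hhk : forall a b, a < -M -> M < b -> h b - h a > eps).
  { intros a b Ha Hb.
    destruct (HP a b Ha Hb) as [y [Hy1 Hy2]].
    assert (Hab : a <= b) by lra.
    assert (I1 : is_RInt h' a b (h b - h a)).
    { apply (is_RInt_derive (V:=R_CompleteNormedModule) h h'); intros; auto. }
    assert (I2 : is_RInt (fun x => - k x) a b (- y)).
    { apply (is_RInt_opp (V:=R_NormedModule) k). exact Hy1. }
    assert (- y <= h b - h a).
    { rewrite <- (is_RInt_unique _ _ _ _ I1). rewrite <- (is_RInt_unique _ _ _ _ I2).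
      apply RInt_le; auto; try (eexists; eauto).
      intros x _. unfold k, h'.
      pose proof (pow2_ge_0 (t*(x-mu)*Om x + Derive Om x)). nra. }
    apply Rabs_def2 in Hy2. unfold eps in *. lra. }
  set (G := fun x => Om x ^ 2).
  set (G' := fun x => 2 * Om x * Derive Om x).
  assert (HGd : forall x, is_derive G x (G' x)).
  { intros x; unfold G, G'. auto_derive. auto. change (fun x0 : R => Om x0) with Om. ring. }
  assert (HG'c : forall x, continuous G' x).
  { intros x; unfold G'; cont; auto. }
  assert (Hhid : forall x, 2 * h x = 2*t*(x-mu)*G x + G' x).
  { intros; unfold h, G, G'; ring. }
  assert (Hxf1 : forall x, (x - mu) * G x <= f x).
  { intros x; unfold f, G. pose proof (pow2_ge_0 (Om x)). pose proof (pow2_ge_0 (x - mu - 1/2)). nra. }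
  assert (Hxf2 : forall x, - ((x - mu) * G x) <= f x).
  { intros x; unfold f, G. pose proof (pow2_ge_0 (Om x)). pose proof (pow2_ge_0 (x - mu + 1/2)). nra. }
  set (D := (2 * t * Lf + 1) / eps).
  assert (HD : eps * D = 2 * t * Lf + 1) by (unfold D; field; lra).
  destruct (classic (exists a0, a0 < -M /\ h a0 >= - eps / 2)) as [[a0 [Ha0 Ha0']] | Hno].
  -
    assert (Hb : forall b, M < b -> h b > eps / 2).
    { intros b Hb. pose proof (Hhk a0 b Ha0 Hb). lra. }
    destruct (ball_ev Om _ Hlp) as [N HN].
    set (u := M + 1). set (X := Rmax N u + 1 + D).
    assert (HD0 : 0 <= D). { unfold D. apply Rle_mult_inv_pos; nra. }
    assert (HuX : u <= X). { unfold X. pose proof (Rmax_r N u). lra. }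
    pose proof (integ_step G G' f 1 t eps u X HuX HGd HG'c Hfc) as Hst.
    assert (Hst2 : eps * (X - u) <= 1 * (G X - G u) + 2 * t * RInt f u X).
    { apply Hst. intros x Hx. assert (h x > eps/2) by (apply Hb; unfold u in Hx; lra).
      pose proof (Hhid x). pose proof (Hxf1 x). nra. }
    assert (RInt f u X <= Lf) by (apply gen_sub; auto).
    assert (G u >= 0) by (unfold G; pose proof (pow2_ge_0 (Om u)); lra).
    assert (HNX : N < X). { unfold X. pose proof (Rmax_l N u). lra. }
    pose proof (HN X HNX) as HX1.
    assert (G X < 1). { unfold G. pose proof (Rabs_pos (Om X)). rewrite <- (pow2_abs (Om X)). nra. }
    assert (X - u >= D). { unfold X. pose proof (Rmax_r N u). lra. }
    assert (eps * (X - u) >= eps * D) by nra.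
    nra.
  -
    assert (Ha : forall a, a < -M -> h a < - eps / 2).
    { intros a Ha. apply Rnot_ge_lt. intro. apply Hno. exists a. auto. }
    destruct (ball_ev Om _ Hlm) as [N HN].
    set (v := - M - 1). set (X := Rmin N v - 1 - D).
    assert (HD0 : 0 <= D). { unfold D. apply Rle_mult_inv_pos; nra. }
    assert (HuX : X <= v). { unfold X. pose proof (Rmin_r N v). lra. }
    pose proof (integ_step G G' f (-1) t eps X v HuX HGd HG'c Hfc) as Hst.
    assert (Hst2 : eps * (v - X) <= -1 * (G v - G X) + 2 * t * RInt f X v).
    { apply Hst. intros x Hx. assert (h x < - eps/2) by (apply Ha; unfold v in Hx; lra).
      pose proof (Hhid x). pose proof (Hxf2 x). nra. }
    assert (RInt f X v <= Lf) by (apply gen_sub; auto).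
    assert (G v >= 0) by (unfold G; pose proof (pow2_ge_0 (Om v)); lra).
    assert (HNX : X < N). { unfold X. pose proof (Rmin_l N v). lra. }
    pose proof (HN X HNX) as HX1.
    assert (G X < 1). { unfold G. pose proof (Rabs_pos (Om X)). rewrite <- (pow2_abs (Om X)). nra. }
    assert (v - X >= D). { unfold X. pose proof (Rmin_r N v). lra. }
    assert (eps * (v - X) >= eps * D) by nra.
    nra.
Qed.

Lemma quad V C W : 0 <= V -> (forall s, 0 <= s^2 * V + 2 * s * C + W) -> C^2 <= V * W.
Proof.
  intros HV H. destruct (Rle_lt_or_eq_dec 0 V HV) as [Hp | H0].
  - specialize (H (- C / V)).
    replace ((- C / V) ^ 2 * V + 2 * (- C / V) * C + W) with (W - C^2 / V) in H by (field; lra).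
    assert (C^2 / V <= W) by lra.
    replace (C^2) with (V * (C^2 / V)) by (field; lra).
    apply Rmult_le_compat_l; lra.
  - subst V. destruct (Req_dec C 0) as [HC | HC].
    + subst C. lra.
    + specialize (H (- (Rabs W + 1) / (2 * C))).
      replace ((- (Rabs W + 1) / (2 * C)) ^ 2 * 0 + 2 * (- (Rabs W + 1) / (2 * C)) * C + W)
        with (W - (Rabs W + 1)) in H by (field; auto).
      pose proof (Rle_abs W). lra.
Qed.

Lemma cs (G S' : R -> R) mu m2 P1 P2 QP
  (HGp : forall x, 0 <= G x)
  (HG : is_RInt_gen G Fm Fp 1)
  (Hq : is_RInt_gen (fun q => q * G q) Fm Fp mu)
  (Hq2 : is_RInt_gen (fun q => q ^ 2 * G q) Fm Fp m2)
  (H1 : is_RInt_gen (fun q => G q * S' q) Fm Fp P1)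
  (H2 : is_RInt_gen (fun q => G q * S' q ^ 2) Fm Fp P2)
  (H3 : is_RInt_gen (fun q => q * G q * S' q) Fm Fp QP) :
  (QP - mu * P1) ^ 2 <= (m2 - mu ^ 2) * (P2 - P1 ^ 2).
Proof.
  apply quad.
  - pose proof (gen_lin _ _ (mu^2) _ _ HG (gen_scal _ 0 _ HG)) as A2.
    pose proof (gen_lin _ _ (-2*mu) _ _ Hq A2) as A3.
    pose proof (gen_lin _ _ 1 _ _ Hq2 A3) as A4.
    replace (m2 - mu^2) with (1 * m2 + (-2*mu * mu + (mu^2 * 1 + 0 * 1))) by ring.
    apply (gen_nonneg _ _ A4). intros x. pose proof (HGp x). pose proof (pow2_ge_0 (x - mu)).
    replace (1 * (x ^ 2 * G x) + (-2 * mu * (x * G x) + (mu ^ 2 * G x + 0 * G x)))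
      with ((x - mu)^2 * G x) by ring. apply Rmult_le_pos; auto.
  - intros s.
    pose proof (gen_lin _ _ 1 _ _ H2 (gen_scal _ 0 _ HG)) as A1.
    pose proof (gen_lin _ _ (-2*s*mu - 2*P1) _ _ H1 A1) as A2.
    pose proof (gen_lin _ _ (2*s) _ _ H3 A2) as A3.
    pose proof (gen_lin _ _ (s^2*mu^2 + 2*s*mu*P1 + P1^2) _ _ HG A3) as A4.
    pose proof (gen_lin _ _ (-2*s^2*mu - 2*s*P1) _ _ Hq A4) as A5.
    pose proof (gen_lin _ _ (s^2) _ _ Hq2 A5) as A6.
    match type of A6 with is_RInt_gen _ _ _ ?v => replace (s ^ 2 * (m2 - mu ^ 2) + 2 * s * (QP - mu * P1) + (P2 - P1 ^ 2)) with v by ring end.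
    apply (gen_nonneg _ _ A6). intros x. pose proof (HGp x).
    pose proof (pow2_ge_0 (s * (x - mu) + (S' x - P1))).
    match goal with |- 0 <= ?e => replace e with (G x * (s * (x - mu) + (S' x - P1))^2) by ring end.
    apply Rmult_le_pos; auto.
Qed.

Lemma part1 (hbar : R) (hhbar : 0 < hbar) (Om S : R -> R) : admissible Om S ->
     0 <= new_lhs hbar Om S /\ new_lhs hbar Om S <= rs_lhs hbar Om S.
Proof.
  intros (H0 & HdO & HddO & Hc2 & HdS & HG & Hlm & Hlp & E1 & E2 & E3 & E4 & E5 & E6).
  unfold ex_Iall in E1, E2, E3, E4, E5, E6. apply (RInt_gen_correct (V:=R_CompleteNormedModule)) in E1, E2, E3, E4, E5, E6.
  set (mu := RInt_gen (fun q => q * Om q ^ 2) Fm Fp) in *.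
  set (m2 := RInt_gen (fun q => q ^ 2 * Om q ^ 2) Fm Fp) in *.
  set (K := RInt_gen (fun q => Om q * Derive_n Om 2 q) Fm Fp) in *.
  set (P1 := RInt_gen (fun q => Om q ^ 2 * Derive S q) Fm Fp) in *.
  set (P2 := RInt_gen (fun q => Om q ^ 2 * Derive S q ^ 2) Fm Fp) in *.
  set (QP := RInt_gen (fun q => q * Om q ^ 2 * Derive S q) Fm Fp) in *.
  assert (Ep2 : mean_p2 hbar Om S = - hbar ^ 2 * K + P2).
  { unfold mean_p2, Iall. apply is_RInt_gen_unique.
    refine (gen_ext _ _ _ _ (gen_lin _ _ (- hbar ^ 2) _ _ E3 E5)). intros x; simpl; ring. }
  assert (HV : forall t, 0 < t -> 0 <= t ^ 2 * (m2 - mu ^ 2) - t - K).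
  { apply (key Om mu m2 K HdO HddO Hc2 Hlm Hlp HG E1 E2 E3). }
  assert (HCS : (QP - mu * P1) ^ 2 <= (m2 - mu ^ 2) * (P2 - P1 ^ 2)).
  { apply (cs (fun q => Om q ^ 2) (Derive S)); try assumption; try (intros; apply pow2_ge_0); try (refine (gen_ext _ _ _ _ E6); intros; ring). }
  assert (HKV : 1/4 <= - K * (m2 - mu ^ 2)).
  { set (V := m2 - mu ^ 2) in *. destruct (Rlt_or_le 0 V) as [Hp | Hn].
    - specialize (HV (/ (2 * V)) ltac:(apply Rinv_0_lt_compat; lra)).
      replace ((/ (2 * V)) ^ 2 * V - / (2 * V) - K) with (- K - / (4 * V)) in HV by (field; lra).
      assert (/ (4 * V) <= - K) by lra.
      replace (-K * V) with ((-K) * V) by ring.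
      apply Rle_trans with (/ (4 * V) * V). right; field; lra.
      apply Rmult_le_compat_r; lra.
    - exfalso. specialize (HV (Rabs K + 1) ltac:(pose proof (Rabs_pos K); lra)).
      pose proof (Rle_abs (-K)). rewrite Rabs_Ropp in H.
      assert ((Rabs K + 1) ^ 2 * V <= 0).
      { pose proof (pow2_ge_0 (Rabs K + 1)). nra. }
      lra. }
  unfold new_lhs, rs_lhs, var_p, var_q, cov_SS, cov_qp, mean_p, mean_q, mean_q2, mean_qp_sym, Iall.
  rewrite Ep2. fold mu m2 P1 P2 QP.
  replace ((- hbar ^ 2 * K + P2 - P1 ^ 2) * (m2 - mu ^ 2) -
  (P2 - P1 ^ 2) * (m2 - mu ^ 2) - hbar ^ 2 / 4) with (hbar ^ 2 * (- K * (m2 - mu ^ 2)) - hbar ^ 2 / 4) by ring.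
  replace ((m2 - mu ^ 2) * (- hbar ^ 2 * K + P2 - P1 ^ 2) - (QP - mu * P1) ^ 2 - hbar ^ 2 / 4)
    with (hbar ^ 2 * (- K * (m2 - mu ^ 2)) - hbar ^ 2 / 4 + ((m2 - mu ^ 2) * (P2 - P1 ^ 2) - (QP - mu * P1) ^ 2)) by ring.
  assert (hbar ^ 2 * (1/4) <= hbar ^ 2 * (- K * (m2 - mu ^ 2))).
  { apply Rmult_le_compat_l; [apply pow2_ge_0 | lra]. }
  split; lra.
Qed.

Lemma lim_intro_p (f : R -> R) l :
  (forall eps, 0 < eps -> exists M, forall x, M < x -> Rabs (f x - l) < eps) ->
  filterlim f Fp (locally l).
Proof.
  intros H P [eps HP]. destruct (H eps (cond_pos eps)) as [M HM].
  exists M. intros x Hx. apply HP. exact (HM x Hx).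
Qed.

Lemma lim_intro_m (f : R -> R) l :
  (forall eps, 0 < eps -> exists M, forall x, x < M -> Rabs (f x - l) < eps) ->
  filterlim f Fm (locally l).
Proof.
  intros H P [eps HP]. destruct (H eps (cond_pos eps)) as [M HM].
  exists M. intros x Hx. apply HP. exact (HM x Hx).
Qed.

Lemma lim_mult F {FF : Filter F} (f g : R -> R) a b :
  filterlim f F (locally a) -> filterlim g F (locally b) ->
  filterlim (fun x => f x * g x) F (locally (a * b)).
Proof.
  intros Hf Hg. exact (filterlim_comp_2 f g (fun u v => mult u v) Hf Hg (filterlim_mult (K:=R_AbsRing) a b)).
Qed.

Lemma lim_plus F {FF : Filter F} (f g : R -> R) a b :
  filterlim f F (locally a) -> filterlim g F (locally b) ->
  filterlim (fun x => f x + g x) F (locally (a + b)).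
Proof.
  intros Hf Hg. exact (filterlim_comp_2 f g (fun u v => plus u v) Hf Hg (filterlim_plus (V:=R_NormedModule) a b)).
Qed.

Lemma lim_const F {FF : Filter F} (c : R) : filterlim (fun _ : R => c) F (locally c).
Proof. apply filterlim_const. Qed.

Lemma lim_ext F {FF : Filter F} (f g : R -> R) l : (forall x, f x = g x) ->
  filterlim f F (locally l) -> filterlim g F (locally l).
Proof. intros H Hf. apply (filterlim_ext f g); auto. Qed.

Lemma atan_lim_p : filterlim atan Fp (locally (PI/2)).
Proof.
  apply lim_intro_p. intros eps He.
  set (d := Rmin eps (PI/2) / 2).
  assert (Hd : 0 < d /\ d < eps /\ d < PI/2).
  { unfold d. pose proof PI_RGT_0. pose proof (Rmin_l eps (PI/2)). pose proof (Rmin_r eps (PI/2)).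
    assert (0 < Rmin eps (PI/2)) by (apply Rmin_glb_lt; lra). lra. }
  exists (tan (PI/2 - d)). intros x Hx.
  apply atan_increasing in Hx. rewrite atan_tan in Hx by lra.
  pose proof (atan_bound x). rewrite Rabs_left by lra. lra.
Qed.

Lemma atan_lim_m : filterlim atan Fm (locally (-(PI/2))).
Proof.
  apply lim_intro_m. intros eps He.
  set (d := Rmin eps (PI/2) / 2).
  assert (Hd : 0 < d /\ d < eps /\ d < PI/2).
  { unfold d. pose proof PI_RGT_0. pose proof (Rmin_l eps (PI/2)). pose proof (Rmin_r eps (PI/2)).
    assert (0 < Rmin eps (PI/2)) by (apply Rmin_glb_lt; lra). lra. }
  exists (tan (-(PI/2) + d)). intros x Hx.
  apply atan_increasing in Hx. rewrite atan_tan in Hx by lra.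
  pose proof (atan_bound x). rewrite Rabs_right by lra. lra.
Qed.

Definition w (x : R) := / (1 + x ^ 2).
Definition u (x : R) := x / (1 + x ^ 2).

Lemma sq_pos x : 0 < 1 + x ^ 2.
Proof. pose proof (pow2_ge_0 x). lra. Qed.

Lemma w_bound x : 0 < w x <= 1.
Proof.
  unfold w. pose proof (sq_pos x). split. apply Rinv_0_lt_compat; lra.
  rewrite <- Rinv_1. apply Rinv_le_contravar; pose proof (pow2_ge_0 x); lra.
Qed.

Lemma u_bound x : x <> 0 -> Rabs (u x) <= / Rabs x.
Proof.
  intros Hx. unfold u. pose proof (sq_pos x). pose proof (Rabs_pos_lt x Hx).
  unfold Rdiv. rewrite Rabs_mult, Rabs_inv, (Rabs_right (1 + x^2)) by lra.
  apply Rmult_le_reg_r with (Rabs x * (1 + x^2)). nra.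
  field_simplify; try lra.
  rewrite <- (pow2_abs x). nra.
Qed.

Lemma w_le x : x <> 0 -> w x <= / Rabs x.
Proof.
  intros Hx. unfold w. pose proof (Rabs_pos_lt x Hx).
  apply Rinv_le_contravar. auto. rewrite <- (pow2_abs x). nra.
Qed.

Lemma small_inv x eps : 0 < eps -> / eps < Rabs x -> x <> 0 /\ / Rabs x < eps.
Proof.
  intros He H. assert (0 < / eps) by (apply Rinv_0_lt_compat; auto).
  split. intro; subst; rewrite Rabs_R0 in H; lra.
  rewrite <- (Rinv_inv eps). apply Rinv_lt_contravar; auto. nra.
Qed.

Lemma u_lim_p : filterlim u Fp (locally 0).
Proof.
  apply lim_intro_p. intros eps He. exists (/ eps). intros x Hx.
  assert (0 < /eps) by (apply Rinv_0_lt_compat; auto).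
  destruct (small_inv x eps He) as [H1 H2]. rewrite Rabs_right; lra.
  rewrite Rminus_0_r. pose proof (u_bound x H1). lra.
Qed.
Lemma u_lim_m : filterlim u Fm (locally 0).
Proof.
  apply lim_intro_m. intros eps He. exists (- / eps). intros x Hx.
  assert (0 < /eps) by (apply Rinv_0_lt_compat; auto).
  destruct (small_inv x eps He) as [H1 H2]. rewrite Rabs_left; lra.
  rewrite Rminus_0_r. pose proof (u_bound x H1). lra.
Qed.
Lemma w_lim_p : filterlim w Fp (locally 0).
Proof.
  apply lim_intro_p. intros eps He. exists (/ eps). intros x Hx.
  assert (0 < /eps) by (apply Rinv_0_lt_compat; auto).
  destruct (small_inv x eps He) as [H1 H2]. rewrite Rabs_right; lra.
  rewrite Rminus_0_r. pose proof (w_le x H1). pose proof (w_bound x). rewrite Rabs_right; lra.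
Qed.
Lemma w_lim_m : filterlim w Fm (locally 0).
Proof.
  apply lim_intro_m. intros eps He. exists (- / eps). intros x Hx.
  assert (0 < /eps) by (apply Rinv_0_lt_compat; auto).
  destruct (small_inv x eps He) as [H1 H2]. rewrite Rabs_left; lra.
  rewrite Rminus_0_r. pose proof (w_le x H1). pose proof (w_bound x). rewrite Rabs_right; lra.
Qed.

Lemma gen_anti (F f : R -> R) la lb v :
  (forall x, is_derive F x (f x)) -> (forall x, continuous f x) ->
  filterlim F Fm (locally la) -> filterlim F Fp (locally lb) -> v = lb - la ->
  is_RInt_gen f Fm Fp v.
Proof.
  intros Hd Hc Hm Hp ->.
  assert (HD : forall x, Derive F x = f x) by (intros; apply is_derive_unique; auto).
  pose proof (is_RInt_gen_Derive (Fa := Fm) (Fb := Fp) F la lb) as H.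
  apply (gen_ext (Derive F)); [exact HD|]. apply H; auto.
  - apply filter_forall. intros. eexists; eauto.
  - apply filter_forall. intros. eapply continuous_ext. intros; symmetry; apply HD. auto.
Qed.

Ltac limb := repeat first [ apply Rbar_locally_filter | apply atan_lim_p | apply atan_lim_m | apply u_lim_p | apply u_lim_m | apply w_lim_p | apply w_lim_m | apply lim_const | eapply lim_plus | eapply lim_mult ].

Ltac side x := try (pose proof (sq_pos x) as Hs; simpl in Hs; repeat split; try (apply Rgt_not_eq; repeat apply Rmult_lt_0_compat; lra)).
Ltac dsolve := intros x; unfold u, w; auto_derive; [ side x | field; pose proof (sq_pos x); simpl in *; lra ].

Ltac csolve := intros x; apply (ex_derive_continuous (K:=R_AbsRing) (V:=R_NormedModule)); auto_derive; side x.

Ltac janti F := eapply (gen_anti F); [ dsolve | csolve | limb | limb | field; pose proof PI_RGT_0; lra ].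

Lemma J1 : is_RInt_gen (fun x => / (1 + x^2)) Fm Fp PI.
Proof. eapply (gen_anti atan); [ intros x; pose proof (is_derive_atan x) as Ha; rewrite Rsqr_pow2 in Ha; exact Ha | csolve | apply atan_lim_m | apply atan_lim_p | field ]. Qed.

Lemma J2 : is_RInt_gen (fun x => / (1 + x^2)^2) Fm Fp (PI/2).
Proof. janti (fun x => /2 * u x + /2 * atan x). Qed.

Lemma J3 : is_RInt_gen (fun x => / (1 + x^2)^3) Fm Fp (3*PI/8).
Proof. janti (fun x => /4 * (u x * w x) + 3/8 * u x + 3/8 * atan x). Qed.

Lemma J4 : is_RInt_gen (fun x => / (1 + x^2)^4) Fm Fp (5*PI/16).
Proof. janti (fun x => /6 * (u x * (w x * w x)) + 5/24 * (u x * w x) + 5/16 * u x + 5/16 * atan x). Qed.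

Lemma Jx2 : is_RInt_gen (fun x => x / (1 + x^2)^2) Fm Fp 0.
Proof. janti (fun x => (-/2) * w x). Qed.

Lemma Jx3 : is_RInt_gen (fun x => x / (1 + x^2)^3) Fm Fp 0.
Proof. janti (fun x => (-/4) * (w x * w x)). Qed.

Lemma Jxx : is_RInt_gen (fun x => x^2 / (1 + x^2)^2) Fm Fp (PI/2).
Proof. janti (fun x => (-/2) * u x + /2 * atan x). Qed.

Definition aa := sqrt (2 / PI).
Definition Om0 (q : R) := aa / (1 + q ^ 2).
Definition d1 (q : R) := -2 * aa * q / (1 + q ^ 2) ^ 2.
Definition d2 (q : R) := aa * (6 * q ^ 2 - 2) / (1 + q ^ 2) ^ 3.

Lemma aa_pos : 0 < aa.
Proof. unfold aa. apply sqrt_lt_R0. pose proof PI_RGT_0. apply Rdiv_lt_0_compat; lra. Qed.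
Lemma aa_sq : aa ^ 2 = 2 / PI.
Proof. unfold aa. rewrite <- Rsqr_pow2. apply Rsqr_sqrt. pose proof PI_RGT_0. apply Rlt_le, Rdiv_lt_0_compat; lra. Qed.

Lemma D1 t : Derive Om0 t = d1 t.
Proof. apply is_derive_unique. unfold Om0, d1. auto_derive. side t. field. pose proof (sq_pos t). lra. Qed.
Lemma D2 t : Derive (Derive Om0) t = d2 t.
Proof. rewrite (Derive_ext _ _ _ D1). apply is_derive_unique. unfold d1, d2. auto_derive. side t.
  field. pose proof (sq_pos t). lra. Qed.
Lemma DA t : Derive atan t = / (1 + t ^ 2).
Proof. apply is_derive_unique. pose proof (is_derive_atan t) as Ha; rewrite Rsqr_pow2 in Ha; exact Ha. Qed.

Lemma ex_adm : admissible Om0 atan.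
Proof.
  pose proof aa_pos as Ha.
  assert (Hsc : forall f l c g, is_RInt_gen f Fm Fp l -> (forall x, c * f x = g x) -> is_RInt_gen g Fm Fp (c * l)).
  { intros f l c g H He. apply (gen_ext (fun x => c * f x)); auto.
    exact (is_RInt_gen_scal _ c _ H). }
  unfold admissible, ex_Iall.
  split; [| split; [| split; [| split; [| split; [| split; [| split; [| split]]]]]]].
  - intros q. unfold Om0. pose proof (sq_pos q). apply Rlt_le, Rdiv_lt_0_compat; lra.
  - intros q. unfold Om0. auto_derive. side q.
  - intros q. apply (ex_derive_ext d1). intros; symmetry; apply D1. unfold d1. auto_derive. side q.
  - intros q. apply (continuous_ext d2). intros; symmetry; apply D2.
    apply (ex_derive_continuous (K:=R_AbsRing) (V:=R_NormedModule)). unfold d2. auto_derive. side q.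
  - intros q. eexists. apply is_derive_atan.
  - replace 1 with (aa ^ 2 * (PI / 2)) by (rewrite aa_sq; field; pose proof PI_RGT_0; lra).
    apply (Hsc _ _ _ _ J2). intros x. unfold Om0. field. pose proof (sq_pos x); lra.
  - replace 0 with (aa * 0) by ring. apply (lim_ext _ (fun x => aa * w x)).
    intros x; unfold Om0, w; field; pose proof (sq_pos x); lra.
    limb.
  - replace 0 with (aa * 0) by ring. apply (lim_ext _ (fun x => aa * w x)).
      intros x; unfold Om0, w; field; pose proof (sq_pos x); lra.
      limb.
  - idtac.
    split. { eexists. apply (Hsc _ _ (aa^2) _ Jx2). intros x. unfold Om0. field. pose proof (sq_pos x); lra. }
    split. { eexists. apply (Hsc _ _ (aa^2) _ Jxx). intros x. unfold Om0. field. pose proof (sq_pos x); lra. }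
    split. { eexists. apply (gen_ext (fun x => aa^2 * (6 * / (1 + x^2)^3) + (- 8 * aa^2) * / (1 + x^2)^4)).
             intros x. change (Derive_n Om0 2 x) with (Derive (Derive Om0) x). rewrite D2.
             unfold Om0, d2. field. pose proof (sq_pos x); lra.
             apply (is_RInt_gen_plus (V:=R_NormedModule) _ _ _ _ (is_RInt_gen_scal _ (aa^2) _ (is_RInt_gen_scal _ 6 _ J3))
               (is_RInt_gen_scal _ (-8 * aa^2) _ J4)). }
    split. { eexists. apply (Hsc _ _ (aa^2) _ J3). intros x. rewrite DA. unfold Om0. field. pose proof (sq_pos x); lra. }
    split. { eexists. apply (Hsc _ _ (aa^2) _ J4). intros x. rewrite DA. unfold Om0. field. pose proof (sq_pos x); lra. }
    { eexists. apply (Hsc _ _ (aa^2) _ Jx3). intros x. rewrite DA. unfold Om0. field. pose proof (sq_pos x); lra. }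
Qed.

Lemma gen_sc f l c g : is_RInt_gen f Fm Fp l -> (forall x, c * f x = g x) -> is_RInt_gen g Fm Fp (c * l).
Proof.
  intros H He. apply (gen_ext (fun x => c * f x)); auto.
  exact (is_RInt_gen_scal _ c _ H).
Qed.

Lemma ex_strict (hbar : R) : new_lhs hbar Om0 atan < rs_lhs hbar Om0 atan.
Proof.
  pose proof PI_RGT_0 as HPI.
  assert (E1 : mean_q Om0 = 0).
  { unfold mean_q, Iall. replace 0 with (aa^2 * 0) by ring. apply is_RInt_gen_unique.
    apply (gen_sc _ _ _ _ Jx2). intros x. unfold Om0. field. pose proof (sq_pos x); lra. }
  assert (E2 : mean_q2 Om0 = 1).
  { unfold mean_q2, Iall. replace 1 with (aa^2 * (PI/2)) by (rewrite aa_sq; field; lra).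
    apply is_RInt_gen_unique.
    apply (gen_sc _ _ _ _ Jxx). intros x. unfold Om0. field. pose proof (sq_pos x); lra. }
  assert (E3 : mean_p Om0 atan = 3/4).
  { unfold mean_p, Iall. replace (3/4) with (aa^2 * (3*PI/8)) by (rewrite aa_sq; field; lra).
    apply is_RInt_gen_unique.
    apply (gen_sc _ _ _ _ J3). intros x. rewrite DA. unfold Om0. field. pose proof (sq_pos x); lra. }
  assert (E4 : Iall (fun q => Om0 q ^ 2 * Derive atan q ^ 2) = 5/8).
  { unfold Iall. replace (5/8) with (aa^2 * (5*PI/16)) by (rewrite aa_sq; field; lra).
    apply is_RInt_gen_unique.
    apply (gen_sc _ _ _ _ J4). intros x. rewrite DA. unfold Om0. field. pose proof (sq_pos x); lra. }
  assert (E5 : mean_qp_sym Om0 atan = 0).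
  { unfold mean_qp_sym, Iall. replace 0 with (aa^2 * 0) by ring. apply is_RInt_gen_unique.
    apply (gen_sc _ _ _ _ Jx3). intros x. rewrite DA. unfold Om0. field. pose proof (sq_pos x); lra. }
  unfold new_lhs, rs_lhs, var_q, cov_SS, cov_qp.
  fold (mean_p Om0 atan). rewrite E1, E2, E3, E4, E5.
  set (vp := var_p hbar Om0 atan). nra.
Qed.

Theorem theorem4 (hbar : R) (hhbar : 0 < hbar) :
  (forall Om S : R -> R, admissible Om S ->
     0 <= new_lhs hbar Om S /\ new_lhs hbar Om S <= rs_lhs hbar Om S) /\
  (exists Om S : R -> R, admissible Om S /\
     new_lhs hbar Om S < rs_lhs hbar Om S).
Proof.
  split.
  - intros Om S H. exact (part1 hbar hhbar Om S H).
  - exists Om0, atan. split. exact ex_adm. apply ex_strict.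
Qed.
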